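(* Let $\mathcal{M}_c=\langle S_c,R_c,V_c\rangle$ be the canonical model of $\mathbf{K}^{\nabla\bullet}$. For every $\phi\in\mathcal{L}(\nabla,\bullet)$ and every $s\in S_c$: $\mathcal{M}_c,s\vDash\phi$ iff $\phi\in s$.
   Context: $\mathcal{L}(\nabla,\bullet)$: $\phi::=p\mid\neg\phi\mid\phi\land\phi\mid\nabla\phi\mid\bullet\phi$ over a nonempty set $\mathbf{P}$ of propositional variables; $\Delta\phi:=\neg\nabla\phi$, $\circ\phi:=\neg\bullet\phi$. Semantics on Kripke models $\langle S,R,V\rangle$: $s\vDash\nabla\phi$ iff there are $t,u$ with $sRt$, $sRu$, $t\vDash\phi$, $u\nvDash\phi$; $s\vDash\bullet\phi$ iff $s\vDash\phi$ and there is $t$ with $sRt$, $t\nvDash\phi$. The Hilbert system $\mathbf{K}^{\nabla\bullet}$ has axioms: A0 all propositional tautologies; A1 $\bullet\phi\to\phi$; A2 $\nabla\phi\leftrightarrow\nabla\neg\phi$; A3 $\bullet(\psi\to\phi)\land\phi\to\bullet\phi$; A4 $\nabla(\phi\land\psi)\to\nabla\phi\vee\nabla\psi$; A5 $\bullet(\phi\land\psi)\to\bullet\phi\vee\bullet\psi$; A6 $\nabla\phi\to\bullet\phi\vee\bullet\neg\phi$; A7 $\bullet(\phi\to\psi)\land\bullet(\neg\phi\to\chi)\to\nabla\phi$; rules R1 $\phi/\Delta\phi$; R2 $\phi/\circ\phi$; R3 $\phi\leftrightarrow\psi/\Delta\phi\leftrightarrow\Delta\psi$; R4 $\phi\leftrightarrow\psi/\circ\phi\leftrightarrow\circ\psi$;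 MP. The canonical model: $S_c$ is the set of maximal $\mathbf{K}^{\nabla\bullet}$-consistent sets; $sR_ct$ iff there exists $\psi$ such that (a) $\bullet\psi\in s$ and (b) for all $\phi$, if $\Delta\phi\land\circ(\neg\psi\to\phi)\in s$ then $\phi\in t$; $V_c(p)=\{s\in S_c\mid p\in s\}$. *)

(* Defs.v *)
From Stdlib Require Import List.
Import ListNotations.
Set Implicit Arguments.

Inductive form (P : Type) : Type :=
| Var : P -> form P
| Neg : form P -> form P
| And : form P -> form P -> form P
| Nab : form P -> form P
| Bul : form P -> form P.

Arguments Var {P} _.
Arguments Neg {P} _.
Arguments And {P} _ _.
Arguments Nab {P} _.
Arguments Bul {P} _.

Definition Imp {P} (a b : form P) : form P := Neg (And a (Neg b)).
Definition Or {P} (a b : form P) : form P := Neg (And (Neg a) (Neg b)).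
Definition Iff {P} (a b : form P) : form P := And (Imp a b) (Imp b a).
Definition Delta {P} (a : form P) : form P := Neg (Nab a).
Definition Circ {P} (a : form P) : form P := Neg (Bul a).

Fixpoint peval {P} (v : form P -> bool) (f : form P) : bool :=
  match f with
  | Var p => v (Var p)
  | Neg a => negb (peval v a)
  | And a b => andb (peval v a) (peval v b)
  | Nab a => v (Nab a)
  | Bul a => v (Bul a)
  end.

(* Propositional tautologies of L(nabla,bullet) (substitution instances of
   classical tautologies) *)
Definition tautology {P} (f : form P) : Prop := forall v, peval v f = true.

Inductive deriv {P : Type} : form P -> Prop :=
| A0 : forall f, tautology f -> deriv f
| A1 : forall f, deriv (Imp (Bul f) f)
| A2 : forall f, deriv (Iff (Nab f) (Nab (Neg f)))
| A3 : forall f g, deriv (Imp (And (Bul (Imp g f)) f) (Bul f))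
| A4 : forall f g, deriv (Imp (Nab (And f g)) (Or (Nab f) (Nab g)))
| A5 : forall f g, deriv (Imp (Bul (And f g)) (Or (Bul f) (Bul g)))
| A6 : forall f, deriv (Imp (Nab f) (Or (Bul f) (Bul (Neg f))))
| A7 : forall f g h,
    deriv (Imp (And (Bul (Imp f g)) (Bul (Imp (Neg f) h))) (Nab f))
| R1 : forall f, deriv f -> deriv (Delta f)
| R2 : forall f, deriv f -> deriv (Circ f)
| R3 : forall f g, deriv (Iff f g) -> deriv (Iff (Delta f) (Delta g))
| R4 : forall f g, deriv (Iff f g) -> deriv (Iff (Circ f) (Circ g))
| MP : forall f g, deriv (Imp f g) -> deriv f -> deriv g.

Fixpoint imp_list {P} (l : list (form P)) (f : form P) : form P :=
  match l with
  | [] => f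
  | a :: l' => Imp a (imp_list l' f)
  end.

Definition fset (P : Type) := form P -> Prop.

Definition consistent {P} (G : fset P) : Prop :=
  ~ exists (l : list (form P)) (f : form P),
      (forall x, In x l -> G x) /\
      deriv (imp_list l f) /\ deriv (imp_list l (Neg f)).

Definition maximal_consistent {P} (G : fset P) : Prop :=
  consistent G /\
  forall D : fset P, consistent D -> (forall x, G x -> D x) -> forall x, D x -> G x.

Record model (P : Type) := {
  world : Type;
  rel : world -> world -> Prop;
  val : P -> world -> Prop
}.

Fixpoint sat {P} (M : model P) (s : world M) (f : form P) : Prop :=
  match f with
  | Var p => val M p s
  | Neg a => ~ sat M s a
  | And a b => sat M s a /\ sat M s b
  | Nab a => exists t u, rel M s t /\ rel M s u /\ sat M t a /\ ~ sat M u a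
  | Bul a => sat M s a /\ exists t, rel M s t /\ ~ sat M t a
  end.

Definition Sc (P : Type) : Type := { s : fset P | maximal_consistent s }.

Definition Rc {P} (s t : Sc P) : Prop :=
  exists psi : form P,
    proj1_sig s (Bul psi) /\
    forall phi : form P,
      proj1_sig s (And (Delta phi) (Circ (Imp (Neg psi) phi))) ->
      proj1_sig t phi.

Definition Vc {P} (p : P) (s : Sc P) : Prop := proj1_sig s (Var p).

Definition canonical_model (P : Type) : model P :=
  {| world := Sc P; rel := @Rc P; val := @Vc P |}.

(* Main.v *)
Require Import Defs.
From Stdlib Require Import List Classical ClassicalEpsilon FunctionalExtensionality PropExtensionality.
Import ListNotations.
Set Implicit Arguments.

Ltac btaut v :=
  intros; unfold Imp, Or, Iff, Delta, Circ in *; simpl in *;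
  repeat match goal with
  | H : _ /\ _ |- _ => destruct H
  | |- context [peval v ?x] => destruct (peval v x)
  | H : context [peval v ?x] |- _ => destruct (peval v x)
  | |- context [v ?x] => destruct (v x)
  | H : context [v ?x] |- _ => destruct (v x)
  end; simpl in *; try discriminate; try reflexivity; try tauto; try (intuition discriminate).

Section Logic.
Variable P : Type.

Fixpoint allt (v : form P -> bool) (l : list (form P)) : Prop :=
  match l with [] => True | x :: l => peval v x = true /\ allt v l end.

Fixpoint alls (s : fset P) (l : list (form P)) : Prop :=
  match l with [] => True | x :: l => s x /\ alls s l end.

Lemma alls_In s l : alls s l <-> forall x, In x l -> s x.
Proof.
  induction l as [|y l IH]; simpl.
  - split; auto; tauto.
  - rewrite IH. split.
    + intros [H1 H2] x [<-|Hx]; auto.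
    + intros H; split; auto.
Qed.

Lemma allt_app v l m : allt v (l ++ m) <-> allt v l /\ allt v m.
Proof. induction l; simpl; tauto. Qed.

Lemma peval_imp_list v l f :
  peval v (imp_list l f) = true <-> (allt v l -> peval v f = true).
Proof.
  induction l as [|x l IH]; simpl.
  - tauto.
  - unfold Imp; simpl.
    destruct (peval v x); destruct (peval v (imp_list l f)); simpl; split;
      intros; try tauto; try discriminate.
    all: try (apply IH; auto; fail).
    all: try (exfalso; destruct IH as [_ IH]; assert (false = true) by (apply IH; intros; apply H; auto);
      discriminate).
Qed.

Lemma deriv_imp_list (l : list (form P)) g : deriv (imp_list l g) -> (forall x, In x l -> deriv x) -> deriv g.
Proof.
  induction l as [|x l IH]; simpl; auto.
  intros H1 H2. apply IH; auto. apply MP with x; auto.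
Qed.

Lemma deriv_taut l g : alls (@deriv P) l -> (forall v, allt v l -> peval v g = true) -> deriv g.
Proof.
  intros H1 H2. apply deriv_imp_list with l.
  - apply A0. intro v. apply peval_imp_list. auto.
  - apply alls_In; auto.
Qed.

Lemma split_list (G : fset P) f l : (forall x, In x l -> G x \/ x = f) ->
  exists m, (forall x, In x m -> G x) /\
    forall v, allt v m -> peval v f = true -> allt v l.
Proof.
  induction l as [|x l IH]; intros H.
  - exists []. simpl; split; auto; tauto.
  - destruct IH as (m & Hm & Hs). { intros; apply H; simpl; auto. }
    destruct (H x (or_introl eq_refl)) as [Hx|Hx].
    + exists (x :: m). split.
      * intros y [<-|Hy]; auto.
      * simpl. intros v [E1 E2] E3. auto.
    + subst x. exists m. split; auto. simpl. intros v E1 E2; auto.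
Qed.

Lemma incons_ext (G : fset P) f : ~ consistent (fun x => G x \/ x = f) ->
  exists m, (forall x, In x m -> G x) /\ deriv (imp_list m (Neg f)).
Proof.
  unfold consistent. intro H. apply NNPP in H.
  destruct H as (l & g & Hl & H1 & H2).
  destruct (@split_list G f l Hl) as (m & Hm & Hs).
  exists m. split; auto.
  apply deriv_taut with [imp_list l g; imp_list l (Neg g)].
  - simpl; auto.
  - intros v [E1 [E2 _]]. apply peval_imp_list. intros Hm'.
    rewrite peval_imp_list in E1, E2. simpl.
    destruct (peval v f) eqn:Ef; auto.
    specialize (Hs v Hm' Ef). specialize (E1 Hs); specialize (E2 Hs).
    simpl in E2. rewrite E1 in E2. discriminate.
Qed.

Section MCS.
Variable s : fset P.
Hypothesis Hs : maximal_consistent s.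

Lemma mcs_ded l f : (forall x, In x l -> s x) -> deriv (imp_list l f) -> s f.
Proof.
  destruct Hs as [Hc Hm]. intros Hl Hd.
  apply (Hm (fun x => s x \/ x = f)); auto.
  intros (l' & g & Hl' & H1 & H2). apply Hc.
  destruct (@split_list s f l' Hl') as (m & Hm' & Hsem).
  exists (l ++ m), g. split.
  { intros x Hx. apply in_app_or in Hx. destruct Hx; auto. }
  split.
  - apply deriv_taut with [imp_list l f; imp_list l' g].
    + simpl; auto.
    + intros v [E1 [E2 _]]. apply peval_imp_list. intros Ha.
      apply allt_app in Ha. destruct Ha as [Ha1 Ha2].
      rewrite peval_imp_list in E1, E2. auto.
  - apply deriv_taut with [imp_list l f; imp_list l' (Neg g)].
    + simpl; auto.
    + intros v [E1 [E2 _]]. apply peval_imp_list. intros Ha.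
      apply allt_app in Ha. destruct Ha as [Ha1 Ha2].
      rewrite peval_imp_list in E1, E2. auto.
Qed.

Lemma mcs_taut l g : alls s l -> (forall v, allt v l -> peval v g = true) -> s g.
Proof.
  intros H1 H2. apply mcs_ded with l.
  - apply alls_In; auto.
  - apply A0. intro v. apply peval_imp_list. auto.
Qed.

Lemma mcs_thm f : deriv f -> s f.
Proof. intro H. apply mcs_ded with []; simpl; auto. tauto. Qed.

Lemma mcs_unsat l : alls s l -> (forall v, allt v l -> False) -> False.
Proof.
  destruct Hs as [Hc _]. intros H1 H2.
  destruct l as [|f l].
  - apply (H2 (fun _ => true)). simpl; auto.
  - apply Hc. exists (f :: l), f. split.
    + apply alls_In; auto.
    + split; apply A0; intro v; apply peval_imp_list; intro Ha; exfalso; eapply H2; eauto.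
Qed.

Lemma mcs_neg f : s (Neg f) <-> ~ s f.
Proof.
  split.
  - intros H1 H2. apply (mcs_unsat [f; Neg f]); simpl; auto.
    intros v [E1 [E2 _]]. simpl in E2. rewrite E1 in E2. discriminate.
  - intro Hn. destruct (classic (consistent (fun x => s x \/ x = f))) as [Hcons|Hinc].
    + exfalso; apply Hn. destruct Hs as [_ Hm]. apply (Hm _ Hcons); auto.
    + destruct (@incons_ext s f Hinc) as (m & Hm1 & Hd). exact (mcs_ded m _ Hm1 Hd).
Qed.

Lemma mcs_or a b : s (Or a b) -> s a \/ s b.
Proof.
  intros H. destruct (classic (s a)) as [Ha|Ha]; auto.
  destruct (classic (s b)) as [Hb|Hb]; auto.
  apply mcs_neg in Ha; apply mcs_neg in Hb. exfalso.
  apply (mcs_unsat [Or a b; Neg a; Neg b]); simpl; auto.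
  intros v. btaut v.
Qed.

End MCS.
End Logic.

Section Lind.
Variable P : Type.
Variable G : fset P.
Hypothesis HG : consistent G.

Definition sle (X Y : fset P) := forall x, X x -> Y x.

Lemma sle_ext X Y : sle X Y -> sle Y X -> X = Y.
Proof.
  intros H1 H2. apply functional_extensionality. intro x.
  apply propositional_extensionality. split; auto.
Qed.

Definition better (X Y : fset P) := consistent Y /\ sle X Y /\ ~ sle Y X.

Definition fnext (X : fset P) : fset P :=
  match excluded_middle_informative (exists Y, better X Y) with
  | left H => proj1_sig (constructive_indefinite_description _ H)
  | right _ => X
  end.

Lemma fnext_spec X : (exists Y, better X Y) -> better X (fnext X).
Proof.
  intro H. unfold fnext. destruct excluded_middle_informative as [H'|H'].
  - exact (proj2_sig (constructive_indefinite_description _ H')).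
  - contradiction.
Qed.

Lemma fnext_le X : sle X (fnext X).
Proof.
  destruct (classic (exists Y, better X Y)) as [H|H].
  - apply fnext_spec in H. apply H.
  - unfold fnext. destruct excluded_middle_informative; [contradiction|]. intros x y; auto.
Qed.

Lemma fnext_cons X : consistent X -> consistent (fnext X).
Proof.
  intro HX. destruct (classic (exists Y, better X Y)) as [H|H].
  - apply fnext_spec in H. apply H.
  - unfold fnext. destruct excluded_middle_informative; [contradiction|]. auto.
Qed.

Inductive tower : fset P -> Prop :=
| tw_base : tower G
| tw_next : forall X, tower X -> tower (fnext X)
| tw_lim : forall C : fset P -> Prop, (forall X, C X -> tower X) ->
    tower (fun x => G x \/ exists X, C X /\ X x).

Lemma tower_base X : tower X -> sle G X.
Proof.
  induction 1.
  - intros x; auto.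
  - intros x Hx. apply fnext_le; auto.
  - intros x Hx; auto.
Qed.

Definition extreme (c : fset P) :=
  forall x, tower x -> sle x c -> ~ sle c x -> sle (fnext x) c.

Lemma sle_trans X Y Z : sle X Y -> sle Y Z -> sle X Z.
Proof. intros H1 H2 x Hx; auto. Qed.

Lemma lem1 c : tower c -> extreme c -> forall x, tower x -> sle x c \/ sle (fnext c) x.
Proof.
  intros Tc Ec x Tx. induction Tx as [|x Tx IH|C HC IH].
  - left. apply tower_base; auto.
  - destruct IH as [IH|IH].
    + destruct (classic (sle c x)) as [H|H].
      * right. rewrite (sle_ext IH H). intros y; auto.
      * left. apply Ec; auto.
    + right. apply sle_trans with x; auto. apply fnext_le.
  - destruct (classic (exists X, C X /\ ~ sle X c)) as [[X [HX1 HX2]]|H].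
    + right. destruct (IH X HX1) as [H|H]; [contradiction|].
      intros y Hy. right. exists X. auto.
    + left. intros y [Hy|[X [HX Hy]]].
      * apply (tower_base Tc); auto.
      * destruct (classic (sle X c)) as [H'|H']; auto.
        exfalso; apply H; eauto.
Qed.

Lemma lem2 c : tower c -> extreme c.
Proof.
  induction 1 as [|c Tc IH|C HC IH].
  - intros x Tx H1 H2. exfalso. apply H2. apply tower_base; auto.
  - intros x Tx H1 H2.
    destruct (lem1 Tc IH Tx) as [H|H]; [|contradiction].
    destruct (classic (sle c x)) as [H'|H'].
    + rewrite (sle_ext H H'). intros y; auto.
    + apply sle_trans with c; auto. apply fnext_le.
  - intros x Tx H1 H2.
    destruct (classic (exists Y, C Y /\ ~ sle Y x)) as [[Y [HY1 HY2]]|H].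
    + destruct (lem1 (HC Y HY1) (IH Y HY1) Tx) as [H|H].
      * apply sle_trans with Y.
        -- apply (IH Y HY1); auto; intro H'; apply HY2; auto.
        -- intros y Hy. right. eauto.
      * exfalso. apply HY2. apply sle_trans with (fnext Y); auto. apply fnext_le.
    + exfalso. apply H2. intros y [Hy|[X [HX Hy]]].
      * apply (tower_base Tx); auto.
      * destruct (classic (sle X x)) as [H'|H']; auto.
        exfalso; apply H; eauto.
Qed.

Lemma tower_chain x c : tower x -> tower c -> sle x c \/ sle c x.
Proof.
  intros Tx Tc. destruct (lem1 Tc (lem2 Tc) Tx) as [H|H]; auto.
  right. apply sle_trans with (fnext c); auto. apply fnext_le.
Qed.

Lemma tower_cons X : tower X -> consistent X.
Proof.
  induction 1 as [|X TX IH|C HC IH].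
  - auto.
  - apply fnext_cons; auto.
  - intros (l & f & Hl & H1 & H2).
    assert (exists Y, tower Y /\ consistent Y /\ forall x, In x l -> Y x) as (Y & TY & CY & HY).
    { clear H1 H2. induction l as [|y l IHl].
      - exists G. split; [constructor|]. split; auto. simpl; tauto.
      - destruct IHl as (Y & TY & CY & HY). { intros; apply Hl; simpl; auto. }
        assert (exists Z, tower Z /\ consistent Z /\ Z y) as (Z & TZ & CZ & HZ).
        { destruct (Hl y (or_introl eq_refl)) as [Hy|[Z [HZ Hy]]].
          - exists G. split; [constructor|]. auto.
          - exists Z; auto. }
        destruct (tower_chain TY TZ) as [H|H].
        + exists Z. split; auto. split; auto. intros x [<-|Hx]; auto.
        + exists Y. split; auto. split; auto. intros x [<-|Hx]; auto. }
    apply CY. exists l, f. auto.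
Qed.

Lemma lindenbaum : exists s, maximal_consistent s /\ sle G s.
Proof.
  set (T := fun x => G x \/ exists X, tower X /\ X x).
  assert (TT : tower T) by (apply tw_lim; auto).
  exists T. split.
  - split.
    + apply tower_cons; auto.
    + intros D CD HTD x Dx.
      destruct (classic (sle D T)) as [H|H]; auto.
      assert (Hb : exists Y, better T Y) by (exists D; split; auto).
      apply fnext_spec in Hb. destruct Hb as (_ & _ & Hn).
      exfalso. apply Hn. intros y Hy. right. exists (fnext T). split; auto.
      apply tw_next; auto.
  - intros x Hx. left; auto.
Qed.

End Lind.

Section Modal.
Variable P : Type.

Definition Phi (s : fset P) (psi phi : form P) : Prop :=
  s (And (Delta phi) (Circ (Imp (Neg psi) phi))).

Fixpoint bconj (d : form P) (l : list (form P)) : form P :=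
  match l with [] => d | x :: l => And x (bconj d l) end.

Lemma conj_allt v d l : peval v (bconj d l) = true -> allt v l.
Proof.
  induction l; simpl; auto. intro H. apply andb_prop in H. destruct H; auto.
Qed.

Section S.
Variable s : fset P.
Hypothesis Hs : maximal_consistent s.

Lemma bul_congr X Y : deriv (Iff X Y) -> s (Bul X) -> s (Bul Y).
Proof.
  intros H1 H2. apply R4 in H1.
  apply (mcs_taut Hs [Bul X; Iff (Circ X) (Circ Y)]).
  - simpl. split; auto. split; auto. apply (mcs_thm Hs); auto.
  - intros v. btaut v.
Qed.

Lemma nab_congr X Y : deriv (Iff X Y) -> s (Nab X) -> s (Nab Y).
Proof.
  intros H1 H2. apply R3 in H1.
  apply (mcs_taut Hs [Nab X; Iff (Delta X) (Delta Y)]).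
  - simpl. split; auto. split; auto. apply (mcs_thm Hs); auto.
  - intros v. btaut v.
Qed.

Lemma Phi_top psi t : tautology t -> Phi s psi t.
Proof.
  intro Ht. unfold Phi.
  assert (H1 : s (Delta t)) by (apply (mcs_thm Hs); apply R1; apply A0; auto).
  assert (H2 : s (Circ (Imp (Neg psi) t))).
  { apply (mcs_thm Hs); apply R2; apply A0. intro v. specialize (Ht v). btaut v. }
  apply (mcs_taut Hs [Delta t; Circ (Imp (Neg psi) t)]); simpl; auto.
  intros v. btaut v.
Qed.

Lemma Phi_and psi a b : Phi s psi a -> Phi s psi b -> Phi s psi (And a b).
Proof.
  unfold Phi. intros Ha Hb.
  assert (Da : s (Delta a)) by (apply (mcs_taut Hs [And (Delta a) (Circ (Imp (Neg psi) a))]); simpl; auto; intros v; btaut v).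
  assert (Db : s (Delta b)) by (apply (mcs_taut Hs [And (Delta b) (Circ (Imp (Neg psi) b))]); simpl; auto; intros v; btaut v).
  assert (Ca : s (Circ (Imp (Neg psi) a))) by (apply (mcs_taut Hs [And (Delta a) (Circ (Imp (Neg psi) a))]); simpl; auto; intros v; btaut v).
  assert (Cb : s (Circ (Imp (Neg psi) b))) by (apply (mcs_taut Hs [And (Delta b) (Circ (Imp (Neg psi) b))]); simpl; auto; intros v; btaut v).
  assert (D : s (Delta (And a b))).
  { apply (mcs_neg Hs). intro HN.
    apply (mcs_unsat Hs [Nab (And a b); Delta a; Delta b; Imp (Nab (And a b)) (Or (Nab a) (Nab b))]).
    - simpl. repeat split; auto. apply (mcs_thm Hs). apply A4.
    - intros v. btaut v. }
  assert (C : s (Circ (Imp (Neg psi) (And a b)))).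
  { apply (mcs_neg Hs). intro HN.
    apply (bul_congr (Y := And (Imp (Neg psi) a) (Imp (Neg psi) b))) in HN.
    2:{ apply A0. intro v. btaut v. }
    apply (mcs_unsat Hs [Bul (And (Imp (Neg psi) a) (Imp (Neg psi) b)); Circ (Imp (Neg psi) a); Circ (Imp (Neg psi) b);
       Imp (Bul (And (Imp (Neg psi) a) (Imp (Neg psi) b))) (Or (Bul (Imp (Neg psi) a)) (Bul (Imp (Neg psi) b)))]).
    - simpl. repeat split; auto. apply (mcs_thm Hs). apply A5.
    - intros v. btaut v. }
  apply (mcs_taut Hs [Delta (And a b); Circ (Imp (Neg psi) (And a b))]); simpl; auto.
  intros v. btaut v.
Qed.

Lemma Phi_list psi d m : tautology d -> (forall x, In x m -> Phi s psi x) -> Phi s psi (bconj d m).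
Proof.
  intro Hd. induction m as [|x m IH]; simpl; intros H.
  - apply Phi_top; auto.
  - apply Phi_and; auto.
Qed.

Lemma single_phi psi f : ~ consistent (fun x => Phi s psi x \/ x = f) ->
  exists ph, Phi s psi ph /\ deriv (Imp ph (Neg f)).
Proof.
  intro H. destruct (@incons_ext P (Phi s psi) f H) as (m & Hm & Hd).
  exists (bconj (Imp f f) m). split.
  - apply Phi_list; auto. intro v. btaut v.
  - apply (deriv_taut [imp_list m (Neg f)]).
    + simpl; auto.
    + intros v [E _]. rewrite peval_imp_list in E.
      set (c := bconj (Imp f f) m).
      unfold Imp. simpl.
      destruct (peval v c) eqn:Ec; simpl; auto.
      apply conj_allt in Ec. specialize (E Ec). simpl in E. rewrite E. reflexivity.
Qed.

Lemma L1 b : s (Bul b) -> consistent (fun x => Phi s b x \/ x = Neg b).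
Proof.
  intro Hb. destruct (classic (consistent (fun x => Phi s b x \/ x = Neg b))) as [H|H]; auto.
  exfalso. destruct (single_phi H) as (ph & Hph & Hd).
  assert (Hi : deriv (Iff (Circ (Imp (Neg b) ph)) (Circ b))).
  { apply R4. apply (deriv_taut [Imp ph (Neg (Neg b))]); simpl; auto. intros v. btaut v. }
  apply (mcs_unsat Hs [Bul b; And (Delta ph) (Circ (Imp (Neg b) ph)); Iff (Circ (Imp (Neg b) ph)) (Circ b)]).
  - simpl. repeat split; auto. apply (mcs_thm Hs); auto.
  - intros v. btaut v.
Qed.

Lemma L2 b : s (Bul b) -> s (Nab b) -> consistent (fun x => Phi s b x \/ x = b).
Proof.
  intros Hb Hn. destruct (classic (consistent (fun x => Phi s b x \/ x = b))) as [H|H]; auto.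
  exfalso. destruct (single_phi H) as (ph & Hph & Hd).
  set (X := Imp (Neg b) ph).
  assert (Hi : deriv (Iff (Delta b) (Delta (And X (Neg ph))))).
  { apply R3. apply (deriv_taut [Imp ph (Neg b)]); simpl; auto. intros v. subst X. btaut v. }
  apply (mcs_unsat Hs [Bul b; Nab b; And (Delta ph) (Circ X);
     Iff (Delta b) (Delta (And X (Neg ph))); Imp (Bul b) b;
     Imp (Nab (And X (Neg ph))) (Or (Nab X) (Nab (Neg ph)));
     Iff (Nab ph) (Nab (Neg ph));
     Imp (Nab X) (Or (Bul X) (Bul (Neg X)));
     Imp (Bul (Neg X)) (Neg X)]).
  - simpl. repeat split; auto; apply (mcs_thm Hs); auto using A1, A2, A4, A6.
  - intros v. subst X. btaut v.
Qed.

Lemma L3 b psi (t : fset P) : s b -> (forall x, Phi s psi x -> t x) -> ~ t b -> s (Bul b).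
Proof.
  intros Hb Ht Hnt. destruct (classic (s (Bul b))) as [H|H]; auto.
  apply (mcs_neg Hs) in H. exfalso. apply Hnt. apply Ht. unfold Phi.
  assert (D : s (Delta b)).
  { apply (mcs_neg Hs). intro HN.
    apply (mcs_unsat Hs [Nab b; Circ b; b; Imp (Nab b) (Or (Bul b) (Bul (Neg b)));
      Imp (Bul (Neg b)) (Neg b)]).
    - simpl. repeat split; auto; apply (mcs_thm Hs); auto using A1, A6.
    - intros v. btaut v. }
  assert (C : s (Circ (Imp (Neg psi) b))).
  { apply (mcs_neg Hs). intro HN.
    apply (mcs_unsat Hs [Bul (Imp (Neg psi) b); b; Circ b;
      Imp (And (Bul (Imp (Neg psi) b)) b) (Bul b)]).
    - simpl. repeat split; auto; apply (mcs_thm Hs); auto using A3.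
    - intros v. btaut v. }
  apply (mcs_taut Hs [Delta b; Circ (Imp (Neg psi) b)]); simpl; auto.
  intros v. btaut v.
Qed.

Lemma L4 a p1 p2 (t u : fset P) : maximal_consistent t ->
  (forall x, Phi s p1 x -> t x) -> (forall x, Phi s p2 x -> u x) ->
  t a -> ~ u a -> s (Nab a).
Proof.
  intros Mt Ht Hu Ta Ua.
  destruct (classic (s (Nab a))) as [H|H]; auto.
  apply (mcs_neg Hs) in H. exfalso.
  assert (B2 : s (Bul (Imp (Neg p2) a))).
  { destruct (classic (s (Bul (Imp (Neg p2) a)))) as [H'|H']; auto.
    apply (mcs_neg Hs) in H'. exfalso. apply Ua. apply Hu. unfold Phi.
    apply (mcs_taut Hs [Delta a; Circ (Imp (Neg p2) a)]); simpl; auto.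
    intros v. btaut v. }
  assert (B1 : s (Bul (Imp (Neg p1) (Neg a)))).
  { destruct (classic (s (Bul (Imp (Neg p1) (Neg a))))) as [H'|H']; auto.
    apply (mcs_neg Hs) in H'. exfalso.
    assert (Tn : t (Neg a)).
    { apply Ht. unfold Phi.
      apply (mcs_taut Hs [Delta a; Circ (Imp (Neg p1) (Neg a)); Iff (Nab a) (Nab (Neg a))]);
        simpl; repeat split; auto.
      - apply (mcs_thm Hs); apply A2.
      - intros v. btaut v. }
    apply (mcs_neg Mt) in Tn. auto. }
  apply (bul_congr (Y := Imp (Neg a) p2)) in B2.
  2:{ apply A0. intro v. btaut v. }
  apply (bul_congr (Y := Imp a p1)) in B1.
  2:{ apply A0. intro v. btaut v. }
  apply (mcs_unsat Hs [Delta a; Bul (Imp (Neg a) p2); Bul (Imp a p1);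
    Imp (And (Bul (Imp a p1)) (Bul (Imp (Neg a) p2))) (Nab a)]).
  - simpl. repeat split; auto; apply (mcs_thm Hs); auto using A7.
  - intros v. btaut v.
Qed.

End S.

Lemma ext_world (s : Sc P) psi f : proj1_sig s (Bul psi) ->
  consistent (fun x => Phi (proj1_sig s) psi x \/ x = f) ->
  exists t : Sc P, Rc s t /\ proj1_sig t f.
Proof.
  intros Hb Hc. destruct (lindenbaum Hc) as (T & HT & Hle).
  exists (exist _ T HT). simpl. split.
  - exists psi. split; auto. intros ph Hph. apply Hle. left. exact Hph.
  - apply Hle. right. reflexivity.
Qed.

Lemma truth (phi : form P) : forall s : Sc P,
  sat (canonical_model P) s phi <-> proj1_sig s phi.
Proof.
  induction phi as [p|a IH|a IHa b IHb|a IH|a IH]; intros [s Hs].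
  - simpl. unfold Vc. simpl. tauto.
  - change (~ sat (canonical_model P) (exist _ s Hs) a <-> s (Neg a)).
    rewrite IH. simpl. symmetry. apply (mcs_neg Hs).
  - change (sat (canonical_model P) (exist _ s Hs) a /\ sat (canonical_model P) (exist _ s Hs) b <-> s (And a b)).
    rewrite IHa, IHb. simpl. split.
    + intros [H1 H2]. apply (mcs_taut Hs [a; b]); simpl; auto. intros v. btaut v.
    + intros H. split.
      * apply (mcs_taut Hs [And a b]); simpl; auto. intros v. btaut v.
      * apply (mcs_taut Hs [And a b]); simpl; auto. intros v. btaut v.
  - change ((exists t u, Rc (exist _ s Hs) t /\ Rc (exist _ s Hs) u /\
       sat (canonical_model P) t a /\ ~ sat (canonical_model P) u a) <-> s (Nab a)).
    split.
    + intros (t & u & Rt & Ru & Ht & Hu). rewrite IH in Ht, Hu.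
      destruct Rt as (p1 & _ & H1), Ru as (p2 & _ & H2).
      destruct t as [t Mt]. destruct u as [u Mu]. simpl in *.
      eapply L4 with (t := t) (u := u); eauto.
    + intros Hn.
      assert (H6 : s (Or (Bul a) (Bul (Neg a)))).
      { apply (mcs_taut Hs [Nab a; Imp (Nab a) (Or (Bul a) (Bul (Neg a)))]); simpl; auto.
        - split; auto. split; auto. apply (mcs_thm Hs). apply A6.
        - intros v. btaut v. }
      apply (mcs_or Hs) in H6. destruct H6 as [Hb|Hb].
      * destruct (@ext_world (exist _ s Hs) a a Hb (L2 Hs Hb Hn)) as (t & Rt & Ta).
        destruct (@ext_world (exist _ s Hs) a (Neg a) Hb (L1 Hs Hb)) as (u & Ru & Ua).
        exists t, u. repeat split; auto.
        -- apply IH; auto.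
        -- rewrite IH. destruct u as [u Mu]. simpl in *. apply (mcs_neg Mu); auto.
      * assert (Hn' : s (Nab (Neg a))).
        { apply (mcs_taut Hs [Nab a; Iff (Nab a) (Nab (Neg a))]); simpl; auto.
          - split; auto. split; auto. apply (mcs_thm Hs). apply A2.
          - intros v. btaut v. }
        destruct (@ext_world (exist _ s Hs) (Neg a) (Neg a) Hb (L2 Hs Hb Hn')) as (t & Rt & Ta).
        destruct (@ext_world (exist _ s Hs) (Neg a) (Neg (Neg a)) Hb (L1 Hs Hb)) as (u & Ru & Ua).
        exists u, t. repeat split; auto.
        -- apply IH. destruct u as [u Mu]. simpl in *.
           apply (mcs_neg Mu) in Ua. destruct (classic (u a)) as [H|H]; auto.
           exfalso. apply Ua. apply (mcs_neg Mu). auto.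
        -- rewrite IH. destruct t as [t Mt]. simpl in *. apply (mcs_neg Mt); auto.
  - change ((sat (canonical_model P) (exist _ s Hs) a /\ exists t, Rc (exist _ s Hs) t /\
       ~ sat (canonical_model P) t a) <-> s (Bul a)).
    rewrite IH. simpl. split.
    + intros [Ha (t & Rt & Ht)]. rewrite IH in Ht.
      destruct Rt as (p & _ & H1). destruct t as [t Mt]. simpl in *.
      eapply L3 with (t := t); eauto.
    + intros Hb. split.
      * apply (mcs_taut Hs [Bul a; Imp (Bul a) a]); simpl; auto.
        -- split; auto. split; auto. apply (mcs_thm Hs). apply A1.
        -- intros v. btaut v.
      * destruct (@ext_world (exist _ s Hs) a (Neg a) Hb (L1 Hs Hb)) as (u & Ru & Ua).
        exists u. split; auto. rewrite IH. destruct u as [u Mu]. simpl in *.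
        apply (mcs_neg Mu); auto.
Qed.
End Modal.

Theorem lemma1 (P : Type) (HP : inhabited P) (phi : form P)
  (s : world (canonical_model P)) :
  sat (canonical_model P) s phi <-> proj1_sig s phi.
Proof.
  exact (truth phi s).
Qed.
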